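(* Let $X$ be a zero-dimensional compact metric space and $T:X\to X$ an aperiodic surjective local homeomorphism with $|Sp_l(X,T)|<\infty$. Then \[{\rm dim}_{\rm Rok}(X,T)\le 2|Sp_l(X,T)|+1.\]
   Context: Aperiodic: no $x$ with $T^n(x)=x$, $n\ge1$. $Sp_l(X,T)=\{x: |T^{-1}(\{x\})|\ge2\}$. For $N\ge1$, an $N$-Rokhlin tower is a collection $\{U_0,\dots,U_{N-1}\}$ of nonempty subsets of $X$ with $U_k=T^{-1}(U_{k-1})$ for $k=1,\dots,N-1$ and $\overline{U_i}\cap\overline{U_j}=\varnothing$ for $i\ne j$; it is open if all $U_i$ are open. ${\rm dim}_{\rm Rok}(X,T)\le d$ means: for every $N\ge1$ there are at most $d+1$ open $N$-Rokhlin towers whose members together cover $X$. ${\rm dim}_{\rm Rok}(X,T)$ is the least such $d$ ($\infty$ if none). *)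

(* Defs.v *)
From HB Require Import structures.
From mathcomp Require Import all_boot all_order all_algebra.
From mathcomp Require Import all_classical all_reals topology normedtype.
Set Implicit Arguments. Unset Strict Implicit. Unset Printing Implicit Defensive.
Import Order.TTheory GRing.Theory Num.Theory.
Local Open Scope classical_set_scope.

Definition zero_dim (X : topologicalType) : Prop :=
  forall (x : X) (U : set X), nbhs x U ->
    exists V : set X, [/\ open V, closed V, V x & V `<=` U].

(* Local homeomorphism: continuous, and every point has an open
   neighbourhood on which T is injective and open (hence a homeomorphism
   onto an open image). *)
Definition local_homeomorphism (X : topologicalType) (T : X -> X) : Prop :=
  continuous T /\
  forall x : X, exists U : set X,
    [/\ open U, U x, {in U &, injective T} &
        forall V : set X, open V -> V `<=` U -> open (T @` V)].

Definition aperiodic (X : Type) (T : X -> X) : Prop :=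
  forall (x : X) (n : nat), (1 <= n)%N -> iter n T x <> x.

Definition Sp_l (X : Type) (T : X -> X) : set X :=
  [set x | exists y1 y2 : X, [/\ y1 <> y2, T y1 = x & T y2 = x]].

Definition rokhlin_tower (X : topologicalType) (T : X -> X) (N : nat)
    (U : nat -> set X) : Prop :=
  [/\ forall k, (k < N)%N -> U k !=set0,
      forall k, (1 <= k)%N -> (k < N)%N -> U k = T @^-1` (U k.-1) &
      forall i j, (i < N)%N -> (j < N)%N -> i <> j ->
        closure (U i) `&` closure (U j) = set0].

Definition open_rokhlin_tower (X : topologicalType) (T : X -> X) (N : nat)
    (U : nat -> set X) : Prop :=
  rokhlin_tower T N U /\ forall k, (k < N)%N -> open (U k).

Definition rok_dim_le (X : topologicalType) (T : X -> X) (d : nat) : Prop :=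
  forall N : nat, (1 <= N)%N ->
    exists (m : nat) (F : nat -> nat -> set X),
      [/\ (m <= d.+1)%N,
          forall j, (j < m)%N -> open_rokhlin_tower T N (F j) &
          forall x : X, exists j k, [/\ (j < m)%N, (k < N)%N & F j k x]].

(* Main.v *)
Require Import Defs.
From HB Require Import structures.
From Stdlib Require List.
From mathcomp Require Import zify.
From mathcomp Require Import all_boot all_order all_algebra.
From mathcomp Require Import all_classical all_reals topology normedtype.
Import Order.TTheory GRing.Theory Num.Theory.
Set Implicit Arguments. Unset Strict Implicit. Unset Printing Implicit Defensive.
Local Open Scope classical_set_scope.

Lemma iter_cont (X : topologicalType) (T : X -> X) k :
  continuous T -> continuous (iter k T).
Proof.
move=> cT; elim: k => [|k IH] x /=; first exact: cvg_id.
exact: (continuous_comp (IH x) (cT _)).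
Qed.

Lemma clopen_pre (X : topologicalType) (f : X -> X) (A : set X) :
  continuous f -> clopen A -> clopen (f @^-1` A).
Proof.
move=> cf [oA cA]; split; first by apply: open_comp => // x _; exact: cf.
have -> : f @^-1` A = ~` (f @^-1` (~` A)).
  by apply/seteqP; split => x /=; [move=> ? []|move/contrapT].
rewrite closedC; apply: open_comp; first by move=> x _; exact: cf.
by rewrite openC.
Qed.

Lemma clopen_exlt (X : topologicalType) n (P : nat -> set X) :
  (forall l, (l < n)%N -> clopen (P l)) ->
  clopen [set x | exists2 l, (l < n)%N & P l x].
Proof.
elim: n => [|n IH] hP.
  have -> : [set x | exists2 l, (l < 0)%N & P l x] = set0.
    by apply/seteqP; split => x // [].
  by split; [exact: open0|exact: closed0].
have -> : [set x | exists2 l, (l < n.+1)%N & P l x] =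
  [set x | exists2 l, (l < n)%N & P l x] `|` P n.
  apply/seteqP; split => x /=.
    move=> [l]; rewrite ltnS leq_eqVlt => /orP [/eqP -> |]; first by right.
    by move=> ? ?; left; exists l.
  by move=> [[l ? ?]|?]; [exists l => //; exact: ltnW|exists n].
apply: clopenU; first by apply: IH => l ?; apply: hP; exact: ltnW.
exact: hP.
Qed.

Lemma clopC (X : topologicalType) (A : set X) : clopen A -> clopen (~` A).
Proof. by case=> ? ?; split; [exact: closed_openC|exact: open_closedC]. Qed.

Lemma clopen_alllt (X : topologicalType) n (P : nat -> set X) :
  (forall l, (l < n)%N -> clopen (P l)) ->
  clopen [set x | forall l, (l < n)%N -> P l x].
Proof.
move=> hP.
have -> : [set x | forall l, (l < n)%N -> P l x] =
   ~` [set x | exists2 l, (l < n)%N & (~` P l) x].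
  apply/seteqP; split => x /=.
    by move=> H [l /H].
  by move=> H l ln; apply: contrapT => nP; apply: H; exists l.
apply: clopC; apply: (@clopen_exlt X n (fun l => ~` P l)) => l /hP; exact: clopC.
Qed.

Lemma clopen_cand (X : topologicalType) (c : Prop) (Q : set X) :
  clopen Q -> clopen [set x | c /\ Q x].
Proof.
move=> hQ; case: (pselect c) => hc.
  by have -> : [set x | c /\ Q x] = Q by apply/seteqP; split => x /= // [].
have -> : [set x | c /\ Q x] = set0 by apply/seteqP; split => x // [].
by split; [exact: open0|exact: closed0].
Qed.

Definition sep (X : Type) (T : X -> X) (N : nat) (W : set X) :=
  forall y l, W y -> (1 <= l)%N -> (l < N)%N -> ~ W (iter l T y).

Lemma sep_pt (X : topologicalType) (x y : X) :
  hausdorff_space X -> zero_dim X -> x <> y ->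
  exists C : set X, [/\ clopen C, C x & ~ C y].
Proof.
move=> hX zX xy.
have cy : closed [set y] by apply: accessible_closed_set1; exact: hausdorff_accessible.
have : nbhs x (~` [set y]).
  by apply: open_nbhs_nbhs; split; [rewrite openC|].
move=> /zX [V [oV cV Vx sV]]; exists V; split => //.
by move=> /sV; apply.
Qed.

Lemma iter_inj_ap (X : Type) (T : X -> X) (x : X) a b :
  aperiodic T -> iter a T x = iter b T x -> a = b.
Proof.
move=> ap; wlog ab : a b / (a <= b)%N.
  move=> H e; case: (leqP a b) => [/H -> //|/ltnW ba]; exact/esym/H.
move=> e; case: (ltngtP a b) => [lab|lba|//]; last first.
  by move: ab; rewrite leqNgt lba.
have : iter (b - a) T (iter a T x) = iter a T x by rewrite -iterD subnK // ltnW.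
by move/ap; rewrite subn_gt0 => /(_ lab).
Qed.

Lemma sep_base (X : topologicalType) (T : X -> X) (N : nat) (x : X) :
  continuous T -> hausdorff_space X -> zero_dim X -> aperiodic T ->
  exists W : set X, [/\ clopen W, W x & sep T N W].
Proof.
move=> cT hX zX ap; elim: N => [|n [W [cW Wx sW]]].
  by exists setT; split => //; split; [exact: openT|exact: closedT].
case: (posnP n) => [n0|n0].
  by exists W; split => // y l Wy l1; rewrite n0 ltnS leqn0 => /eqP l0; move: l1; rewrite l0.
have xn : x <> iter n T x.
  by move=> e; have := @iter_inj_ap _ T x 0 n ap e; move: n0 => /[swap] <-.
have [C [cC Cx nC]] := sep_pt hX zX xn.
exists (W `&` C `&` (iter n T @^-1` (~` C))); split.
- apply: clopenI; first exact: clopenI.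
  by apply: clopen_pre; [exact: iter_cont|exact: clopC].
- by split.
move=> y l [[Wy Cy] nCy] l1; rewrite ltnS leq_eqVlt => /orP [/eqP ->|ln].
  by move=> [[_ ?] _].
by move=> [[+ _] _]; exact: sW.
Qed.

Lemma img_open (X : topologicalType) (T : X -> X) (A : set X) :
  local_homeomorphism T -> open A -> open (T @` A).
Proof.
move=> [_ lh] oA; rewrite openE => _ [x Ax <-].
have [U [oU Ux _ hU]] := lh x.
have o := hU (A `&` U) (openI oA oU) (@subIsetr _ _ _).
apply: (@filterS _ _ _ (T @` (A `&` U))).
  by move=> z [w [Aw _] <-]; exists w.
by apply: open_nbhs_nbhs; split => //; exists x.
Qed.

Lemma img_clopen (X : topologicalType) (T : X -> X) (A : set X) :
  hausdorff_space X -> compact [set: X] ->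
  local_homeomorphism T -> clopen A -> clopen (T @` A).
Proof.
move=> hX cX lh [oA cA]; split; first exact: img_open.
apply: compact_closed => //; apply: continuous_compact.
  by apply: continuous_subspaceT; case: lh.
exact: (subclosed_compact cA cX).
Qed.

Lemma iter_img_clopen (X : topologicalType) (T : X -> X) (A : set X) l :
  hausdorff_space X -> compact [set: X] ->
  local_homeomorphism T -> clopen A -> clopen (iter l T @` A).
Proof.
move=> hX cX lh cA; elim: l => [|l IH].
  by have -> : iter 0 T @` A = A by apply/seteqP; split => x /=; [case=> y ? <-|exists x].
have -> : iter l.+1 T @` A = T @` (iter l T @` A).
  apply/seteqP; split => x /=; first by case=> y Ay <-; exists (iter l T y) => //; exists y.
  by case=> _ [y Ay <-] <-; exists y.
exact: img_clopen.
Qed.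

Definition covered (X : Type) (T : X -> X) (N : nat) (M : set X) (x : X) :=
  (exists2 l, (l < N)%N & M (iter l T x)) \/
  (exists l m, [/\ (1 <= l)%N, (l < N)%N, M m & iter l T m = x]).

Lemma covered_mono (X : Type) (T : X -> X) N (M M' : set X) x :
  M `<=` M' -> covered T N M x -> covered T N M' x.
Proof.
move=> s [[l lN Ml]|[l [m [l1 lN Mm e]]]]; first by left; exists l => //; exact: s.
by right; exists l, m; split => //; exact: s.
Qed.

Lemma greedy (X : topologicalType) (T : X -> X) (N : nat) (L : seq (set X)) :
  (0 < N)%N -> hausdorff_space X -> compact [set: X] -> local_homeomorphism T ->
  (forall W, List.In W L -> clopen W /\ sep T N W) ->
  exists M, [/\ clopen M, sep T N M &
    forall x W, List.In W L -> W x -> covered T N M x].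
Proof.
move=> N0 hX cX lh; have cT : continuous T by case: lh.
elim: L => [|W L IH] hL.
  exists set0; split => //; first exact: clopen0.
have [M' [cM' sM' covM']] := IH (fun W' h => hL W' (or_intror h)).
have [cW sW] := hL W (or_introl erefl).
pose Nr := [set x | exists2 l, (l < N)%N & M' (iter l T x)] `|`
           [set x | exists2 l, (l < N)%N & (1 <= l)%N /\ (iter l T @` M') x].
have cNr : clopen Nr.
  apply: clopenU.
    by apply: (@clopen_exlt X N (fun l => iter l T @^-1` M')) => l _;
      apply: clopen_pre => //; exact: iter_cont.
  apply: (@clopen_exlt X N (fun l => [set x | (1 <= l)%N /\ (iter l T @` M') x])) => l _.
  by apply: clopen_cand; exact: iter_img_clopen.
pose A := W `&` ~` Nr.
exists (M' `|` A); split.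
- by apply: clopenU => //; apply: clopenI => //; exact: clopC.
- move=> y l [My|[Wy nNy]] l1 lN [Mly|[Wly nNly]].
  + exact: sM' My l1 lN Mly.
  + by apply: nNly; right; exists l => //; split => //; exists y.
  + by apply: nNy; left; exists l.
  + exact: sW Wy l1 lN Wly.
move=> x W0 [<-|inL] W0x; last first.
  by apply: (@covered_mono _ _ _ M'); [move=> z ?; left|exact: covM' inL W0x].
case: (pselect (Nr x)) => [[[l lN Ml]|[l lN [l1 [m Mm e]]]]|nN].
- by left; exists l => //; left.
- by right; exists l, m; split => //; left.
- by left; exists 0%N => //; right; split.
Qed.

Lemma finite_good_cover (X : topologicalType) (good : set X -> Prop) :
  compact [set: X] -> (forall x, exists W, [/\ good W, open W & W x]) ->
  exists L : seq (set X), (forall W, List.In W L -> good W) /\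
    forall x, exists W, List.In W L /\ W x.
Proof.
move=> cX hx.
pose F : set_system (seq (set X)) := [set Q | exists L0 : seq (set X),
   (forall W, List.In W L0 -> good W) /\
   forall L, (forall W, List.In W L0 -> List.In W L) -> Q L].
have FF : Filter F.
  split.
  - by exists nil; split.
  - move=> P Q [L0 [g0 h0]] [L1 [g1 h1]]; exists (L0 ++ L1); split.
      by move=> W hW; case: (List.in_app_or _ _ _ hW) => [/g0|/g1].
    by move=> L hL; split; [apply: h0|apply: h1] => W hW; apply: hL;
       apply: List.in_or_app; [left|right].
  - by move=> P Q PQ [L0 [g0 h0]]; exists L0; split => // L /h0 /PQ.
have NC : near_covering [set: X] by apply/compact_near_coveringP.
have := NC _ F (fun L x => exists W, List.In W L /\ W x) FF.
move=> H; have [] := H.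
- move=> x _; have [W [gW oW Wx]] := hx x.
  exists (W, [set L | List.In W L]); first split => /=.
  + by apply: open_nbhs_nbhs; split.
  + by exists [:: W]; split => [W' [<-|]//|L]; apply; left.
  by move=> [x' L] [/= Wx' inL]; exists W.
move=> L0 [g0 h0]; exists L0; split => // x.
by apply: (h0 L0) => //.
Qed.

Lemma bound_visits (X : eqType) (T : X -> X) (x : X) (s : seq X) :
  aperiodic T -> exists B, forall t, (B < t)%N -> iter t T x \notin s.
Proof.
move=> ap; elim: s => [|p s [B hB]]; first by exists 0%N.
case: (pselect (exists t0, iter t0 T x = p)) => [[t0 e0]|ne].
  exists (maxn B t0) => t; rewrite gtn_max => /andP [Bt t0t].
  rewrite in_cons negb_or hB // andbT; apply/eqP => e.
  by have := iter_inj_ap ap (etrans e (esym e0)) => ett; move: t0t; rewrite ett ltnn.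
exists B => t Bt; rewrite in_cons negb_or hB // andbT; apply/eqP => e.
by apply: ne; exists t.
Qed.

Lemma merge_sp (X : Type) (T : X -> X) l : forall a b,
  iter l T a = iter l T b -> a <> b ->
  exists j, [/\ (1 <= j)%N, (j <= l)%N & Sp_l T (iter j T a)].
Proof.
elim: l => [|l IH] a b; first by move=> /= ->.
rewrite !iterSr => e ab.
case: (pselect (T a = T b)) => [eT|nT].
  exists 1%N; split => //=; exists a, b; split => //.
have [j [j1 jl hj]] := IH (T a) (T b) e nT.
by exists j.+1; split => //; rewrite iterSr.
Qed.

Lemma hit (X : eqType) (T : X -> X) (N : nat) (s : seq X) (M : set X) :
  aperiodic T -> Sp_l T = [set x | x \in s] ->
  (forall x, covered T N M x) -> forall x, exists k, M (iter k T x).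
Proof.
move=> ap hS cov x.
have [B hB] := bound_visits x s ap.
case: (cov (iter (B + N) T x)) => [[l lN Ml]|[l [m [l1 lN Mm e]]]].
  by exists (l + (B + N))%N; rewrite iterD.
have ea : iter l T (iter (B + N - l) T x) = iter l T m.
  by rewrite e -iterD subnKC // (leq_trans (ltnW lN)) // leq_addl.
case: (pselect (iter (B + N - l) T x = m)) => [e2|ne]; first by exists (B + N - l)%N; rewrite e2.
have [j [j1 jl]] := merge_sp ea ne.
rewrite hS /= -iterD => hj; exfalso.
move: hj; apply/negP; apply: hB.
lia.
Qed.

Lemma bounded_hit (X : topologicalType) (T : X -> X) (M : set X) :
  continuous T -> open M -> compact [set: X] ->
  (forall x, exists k, M (iter k T x)) ->
  exists K, forall x, exists2 k, (k <= K)%N & M (iter k T x).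
Proof.
move=> cT oM cX hx.
pose F : set_system nat := [set Q | exists K0, forall K, (K0 <= K)%N -> Q K].
have FF : Filter F.
  split.
  - by exists 0%N.
  - move=> P Q [a ha] [b hb]; exists (maxn a b) => K; rewrite geq_max => /andP [? ?].
    by split; [apply: ha|apply: hb].
  - by move=> P Q PQ [a ha]; exists a => K /ha /PQ.
have NC : near_covering [set: X] by apply/compact_near_coveringP.
have [] := NC _ F (fun K x => exists2 k, (k <= K)%N & M (iter k T x)) FF.
- move=> x _; have [k Mk] := hx x.
  exists (iter k T @^-1` M, [set K | (k <= K)%N]); first split => /=.
  + apply: open_nbhs_nbhs; split => //; apply: open_comp => //.
    by move=> y _; exact: iter_cont.
  + by exists k.
  by move=> [x' K] [/= Mx' kK]; exists k.
move=> K0 h0; exists K0 => x; exact: (h0 K0 (leqnn _)).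
Qed.

Lemma iter_surj (X : Type) (T : X -> X) k :
  (forall y, exists x, T x = y) -> forall y, exists x, iter k T x = y.
Proof.
move=> hs; elim: k => [|k IH] y; first by exists y.
have [z <-] := hs y; have [x <-] := IH z; by exists x.
Qed.

Lemma sep_pair (X : Type) (T : X -> X) N (B : set X) i j x :
  sep T N B -> (i < j)%N -> (j < N)%N -> B (iter i T x) -> B (iter j T x) -> False.
Proof.
move=> sB ij jN Bi Bj.
apply: (sB _ (j - i)%N Bi); [by rewrite subn_gt0|by rewrite (leq_ltn_trans (leq_subr _ _))|].
by rewrite -iterD subnK // ltnW.
Qed.

Lemma tower_of (X : topologicalType) (T : X -> X) (N : nat) (B : set X) :
  continuous T -> (forall y, exists x, T x = y) -> clopen B -> B !=set0 ->
  sep T N B -> open_rokhlin_tower T N (fun k x => B (iter k T x)).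
Proof.
move=> cT hs cB [b Bb] sB.
have cl : forall k, clopen (fun x => B (iter k T x)).
  by move=> k; apply: (@clopen_pre X (iter k T) B) => //; exact: iter_cont.
split; last by move=> k _; case: (cl k).
split.
- by move=> k _; have [x e] := iter_surj k hs b; exists x; rewrite /= e.
- case=> // k _ _; apply/seteqP; split => x /=; rewrite -/(iter k.+1 T x) iterSr //. 
move=> i j iN jN ij.
have ccl : forall k, closure (fun x => B (iter k T x)) = (fun x => B (iter k T x)).
  by move=> k; apply/esym/closure_id; case: (cl k).
rewrite !ccl; apply/seteqP; split => // x [Bi Bj].
case: (ltngtP i j) => [lt|lt|eq] //.
- exact: (sep_pair sB lt jN Bi Bj).
- exact: (sep_pair sB lt iN Bj Bi).
Qed.

Lemma min_ex (P : nat -> Prop) :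
  (exists k, P k) -> exists k, P k /\ forall i, (i < k)%N -> ~ P i.
Proof.
move=> [k Pk]; elim: k {-2}k (leqnn k) Pk => [|n IH] k kn Pk.
  by exists k; split => // i; move: kn; rewrite leqn0 => /eqP ->.
case: (pselect (exists i, (i < k)%N /\ P i)) => [[i [ik Pi]]|ne].
  by apply: (IH i) => //; rewrite -ltnS (leq_trans ik kn).
by exists k; split => // i ik Pi; apply: ne; exists i.
Qed.

Unset Implicit Arguments.

Theorem theorem4p7 (R : realType) (X : pseudoMetricType R)
  (T : X -> X) (s : seq X) :
  hausdorff_space X -> compact [set: X] -> zero_dim X ->
  aperiodic T -> (forall y : X, exists x : X, T x = y) -> local_homeomorphism T ->
  uniq s -> Sp_l T = [set x | x \in s] ->
  rok_dim_le T (2 * size s + 1).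
Proof.
move=> hX cX zX ap surj lh us hS N N1.
have cT : continuous T by case: lh.
have [L [gL coverL]] := @finite_good_cover X (fun W => clopen W /\ sep T N W) cX
  (fun x => let: ex_intro W (And3 cW Wx sW) := sep_base N x cT hX zX ap in
            ex_intro _ W (And3 (conj cW sW) (proj1 cW) Wx)).
have [M [cM sM covM]] := greedy N1 hX cX lh gL.
have cov : forall x, covered T N M x.
  by move=> x; have [W [inW Wx]] := coverL x; exact: covM inW Wx.
have hitM := hit ap hS cov.
have [K hK] := bounded_hit cT (proj1 cM) cX hitM.
pose first k x := M (iter k T x) /\ forall i, (i < k)%N -> ~ M (iter i T x).
have first_ex : forall x, exists k, first k x by move=> x; exact: min_ex (hitM x).
have first_uniq : forall a b x, first a x -> first b x -> a = b.
  move=> a b x [Ma ha] [Mb hb]; case: (ltngtP a b) => // ab.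
  - by case: (hb _ ab).
  - by case: (ha _ ab).
have first_shift : forall k l x, (l <= k)%N -> first k x -> first (k - l) (iter l T x).
  move=> k l x lk [Mk hk]; split; first by rewrite -iterD subnK.
  by move=> i il; rewrite -iterD; apply: hk; rewrite -(subnK lk) ltn_add2r.
have first_le : forall k x, first k x -> (k <= K)%N.
  move=> k x [Mk hk]; have [k' k'K Mk'] := hK x.
  by rewrite leqNgt; apply/negP => Kk; apply: (hk k') => //; exact: (leq_ltn_trans k'K).
pose B1 := fun x => exists2 k, (k < K.+1)%N &
   ((N <= k)%N && (N %| k)%N) /\ (M (iter k T x) /\ forall i, (i < k)%N -> ~ M (iter i T x)).
have cB1 : clopen B1.
  apply: (@clopen_exlt X K.+1 (fun k x => ((N <= k)%N && (N %| k)%N) /\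
     (M (iter k T x) /\ forall i, (i < k)%N -> ~ M (iter i T x)))) => k _.
  apply: (@clopen_cand X _ (fun x => M (iter k T x) /\ forall i, (i < k)%N -> ~ M (iter i T x))).
  apply: clopenI; first by apply: (@clopen_pre X (iter k T) M) => //; exact: iter_cont.
  apply: (@clopen_alllt X k (fun i x => ~ M (iter i T x))) => i _.
  apply: clopC; apply: (@clopen_pre X (iter i T) M) => //; exact: iter_cont.
have sB1 : sep T N B1.
  move=> y l [k _ [/andP [Nk dk] fk]] l1 lN [k' _ [/andP [Nk' dk'] fk']].
  have lk : (l <= k)%N by apply: ltnW; exact: (leq_trans lN Nk).
  have e := first_uniq _ _ _ (first_shift k l y lk fk) fk'.
  rewrite -e in dk'. have : (N %| l)%N by rewrite -(subKn lk); exact: dvdn_sub. by move/(dvdn_leq l1); rewrite leqNgt lN.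
have covB : forall x, (exists2 k, (k < N)%N & M (iter k T x)) \/
                      (exists2 k, (k < N)%N & B1 (iter k T x)).
  move=> x; have [k fk] := first_ex x.
  case: (ltnP k N) => [kN|Nk]; first by left; exists k => //; case: fk.
  right; exists (k %% N)%N; first by rewrite ltn_pmod.
  have fk' := first_shift k (k %% N)%N x (leq_mod _ _) fk.
  exists (k - k %% N)%N; last split => //.
  - by rewrite ltnS (leq_trans (leq_subr _ _)) //; exact: first_le fk.
  - have ek : (k - k %% N = k %/ N * N)%N by rewrite {1}(divn_eq k N) addnK.
    rewrite ek dvdn_mull // andbT leq_pmull // divn_gt0 //.
case: (pselect (B1 !=set0)) => [B1n|B10].
  have Mn : M !=set0.
    by case: B1n => x [k _ [_ [Mk _]]]; exists (iter k T x).
  exists 2%N, (fun j => if j == 0%N then (fun k x => M (iter k T x))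
                               else (fun k x => B1 (iter k T x))); split.
  - lia.
  - by case=> [|j] _ /=; apply: tower_of.
  move=> x; case: (covB x) => [[k kN Mk]|[k kN Bk]].
    by exists 0%N, k.
  by exists 1%N, k.
case: (pselect (M !=set0)) => [Mn|M0].
  exists 1%N, (fun j => fun k x => M (iter k T x)); split.
  - lia.
  - by move=> j _; apply: tower_of.
  move=> x; case: (covB x) => [[k kN Mk]|[k kN Bk]].
    by exists 0%N, k.
  by exfalso; apply: B10; exists (iter k T x).
exists 0%N, (fun j k x => M (iter k T x)); split => // x.
by exfalso; have [k Mk] := hitM x; apply: M0; exists (iter k T x).
Qed.
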